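(* Almost surely, the function $\mathcal D:\mathbb R\to\mathbb R$ is continuous and non-decreasing.
   Context: Last passage percolation (LPP): for a sequence $f=(f_1,f_2,\dots)$ of continuous functions $\mathbb R\to\mathbb R$ (thought of as placed on horizontal lines indexed $1,2,\dots$ from top to bottom), $y\le x$ and $n\ge m$, an up-right path $\gamma$ from $(y,n)$ to $(x,m)$ is specified by jump times $y=t_{n+1}\le t_n\le\dots\le t_{m+1}\le t_m=x$ (the path is on line $i$ during $[t_{i+1},t_i]$ and jumps from line $i$ to line $i-1$ at time $t_i$); its weight is $f[\gamma]=\sum_{i=m}^n\big(f_i(t_i)-f_i(t_{i+1})\big)$, and $f[(y,n)\to(x,m)]=\sup_\gamma f[\gamma]$ over all such paths; a maximizing path is a geodesic. The parabolic Airy line ensemble $\mathcal P=(\mathcal P_1,\mathcal P_2,\dots)$ is the random $\mathbb N$-indexed collection of continuous non-intersecting curves $\mathcal P_1>\mathcal P_2>\cdots$ on $\mathbb R$ such that, for all $m\in\mathbb N$ and $t_1<\dots<t_m$, the point process $\{(\mathcal P_i(t_j)+t_j^2,t_j): i\in\mathbb N, j\le m\}$ is determinantal with the extended Airy kernel $K((x,t);(y,s))=\int_0^\infty e^{-u(t-s)}\mathrm{Ai}(x+u)\mathrm{Ai}(y+u)\,du$ for $t\ge s$ and $-\int_{-\infty}^0 e^{-u(t-s)}\mathrm{Ai}(x+u)\mathrm{Ai}(y+u)\,du$ for $t<s$. The parabolic Airy sheet $\mathcal S:\mathbb R^2\to\mathbb R$ is the continuous random process (unique in law) such that (i) $\mathcal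 S(\cdot+z,\cdot+z)\overset{d}{=}\mathcal S(\cdot,\cdot)$ for every $z\in\mathbb R$, and (ii) $\mathcal S$ can be coupled with $\mathcal P$ so that $\mathcal S(0,\cdot)=\mathcal P_1(\cdot)$ and, almost surely, for all rational $x,y,z$ with $y>0$ there is a random $K$ such that for all $k\ge K$, $\mathcal S(y,z)-\mathcal S(y,x)=\mathcal P[(y)_k\to(z,1)]-\mathcal P[(y)_k\to(x,1)]$, where $(y)_k=(-(k/(2y))^{1/2},k)$. Fix $y_a<y_b$ and define the weight difference profile $\mathcal D(x)=\mathcal S(y_b,x)-\mathcal S(y_a,x)$. *)

(* Defs.v *)
From HB Require Import structures.
From mathcomp Require Import all_boot all_order all_algebra.
From mathcomp Require Import all_classical all_reals all_analysis.

Set Implicit Arguments.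
Unset Strict Implicit.
Unset Printing Implicit Defensive.

Import Order.TTheory GRing.Theory Num.Theory.
Import numFieldNormedType.Exports.

Local Open Scope classical_set_scope.
Local Open Scope ring_scope.

Section AiryDefs.
Variable R : realType.

Local Notation leb := (@lebesgue_measure R).

Definition airy_partial (x b : R) : R :=
  \int[leb]_(t in `[0, b]) cos (t ^+ 3 / 3 + x * t).

Definition Ai (x : R) : R := pi^-1 * lim (airy_partial x @ +oo).

Definition airy_kernel (x t y s : R) : R :=
  if s <= t then
    \int[leb]_(u in `[0, +oo[) (expR (- (u * (t - s))) * Ai (x + u) * Ai (y + u))
  else
    - \int[leb]_(u in `]-oo, 0]) (expR (- (u * (t - s))) * Ai (x + u) * Ai (y + u)).

Fixpoint iter_integral (Bs : seq (set R)) (f : seq R -> R) : R :=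
  match Bs with
  | [::] => f [::]
  | B :: Bs' => \int[leb]_(x in B) iter_integral Bs' (fun xs => f (x :: xs))
  end.

(* number of points (L_i(s) + s^2, s), i >= 1, lying in B x {s} *)
Definition level_count (L : nat -> R -> R) (B : set R) (s : R) : \bar R :=
  (\sum_(1 <= i <oo) (\1_B (L i s + s ^+ 2))%:E)%E.

(* Parabolic Airy line ensemble; curves are L 1, L 2, ... (index 0 unused).
   Determinantal structure stated through the factorial moments /
   correlation functions w.r.t. Lebesgue x counting measure:
   for pairwise disjoint bounded Borel sets B_k x {s_k},
   E[prod_k N(B_k x {s_k})] = int_{B_1 x..x B_n} det[K((x_a,s_a);(x_b,s_b))] dx. *)
Definition is_parabolic_Airy_line_ensemble (d : measure_display)
    (Omega : measurableType d) (Pr : probability Omega R)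
    (L : Omega -> nat -> R -> R) : Prop :=
  (forall i t, measurable_fun setT (fun w => L w i t)) /\
  (forall w i, continuous (L w i)) /\
  (forall w i t, (1 <= i)%N -> L w i.+1 t < L w i t) /\
  (forall (n : nat) (s : 'I_n -> R) (B : 'I_n -> set R),
     (forall k, measurable (B k)) ->
     (forall k, exists M : R, forall x, B k x -> `|x| <= M) ->
     (forall k l, k != l -> s k != s l \/ B k `&` B l = set0) ->
     (\int[Pr]_w (\big[*%E/1%E]_(k < n) level_count (L w) (B k) (s k)))%E =
     (iter_integral [seq B k | k <- enum 'I_n]
        (fun xs => \det (\matrix_(a < n, b < n)
                          airy_kernel (nth 0 xs a) (s a) (nth 0 xs b) (s b))))%:E).

Definition lpp (f : nat -> R -> R) (y : R) (n : nat) (x : R) (m : nat) : R :=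
  sup [set v : R | exists t : nat -> R,
         [/\ t n.+1 = y, t m = x,
             (forall i, (m <= i <= n)%N -> t i.+1 <= t i) &
             v = \sum_(m <= i < n.+1) (f i (t i) - f i (t i.+1))]].

(* the point (y)_k = (-(k/(2y))^{1/2}, k), first coordinate *)
Definition start_time (y : R) (k : nat) : R := - Num.sqrt (k%:R / (2 * y)).

Definition is_parabolic_Airy_sheet (d : measure_display)
    (Omega : measurableType d) (Pr : probability Omega R)
    (S : Omega -> R -> R -> R) : Prop :=
  (forall x y, measurable_fun setT (fun w => S w x y)) /\
  (forall w, continuous (fun p : R * R => S w p.1 p.2)) /\
  (* (i): S(.+z,.+z) has the same law (finite-dimensional distributions) as S *)
  (forall (z : R) (pts : seq (R * R * R)),
     Pr [set w | forall p, p \in pts -> S w (p.1.1 + z) (p.1.2 + z) <= p.2] =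
     Pr [set w | forall p, p \in pts -> S w p.1.1 p.1.2 <= p.2]) /\
  (exists L : Omega -> nat -> R -> R,
     [/\ is_parabolic_Airy_line_ensemble Pr L,
         (\forall w \ae Pr, forall x, S w 0 x = L w 1%N x) &
         (\forall w \ae Pr, forall x y z : rat, 0 < y ->
            exists K : nat, forall k : nat, (K <= k)%N ->
              S w (ratr y) (ratr z) - S w (ratr y) (ratr x) =
              lpp (L w) (start_time (ratr y) k) k (ratr z) 1
              - lpp (L w) (start_time (ratr y) k) k (ratr x) 1)]).

End AiryDefs.

(* Main.v *)
Require Import Defs.
From HB Require Import structures.
From mathcomp Require Import all_boot all_order all_algebra.
From mathcomp Require Import all_classical all_reals all_analysis.
From mathcomp Require Import ring lra zify.
Import Order.TTheory GRing.Theory Num.Theory.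
Import numFieldNormedType.Exports.
Local Open Scope classical_set_scope.
Local Open Scope ring_scope.

Section LPP.
Variable R : realType.
Implicit Types (f : nat -> R -> R) (t s : nat -> R).

Definition PS f (y : R) (n : nat) (x : R) (m : nat) := [set v : R | exists t : nat -> R,
         [/\ t n.+1 = y, t m = x,
             (forall i, (m <= i <= n)%N -> t i.+1 <= t i) &
             v = \sum_(m <= i < n.+1) (f i (t i) - f i (t i.+1))]].

Lemma lppE f y n x m : lpp f y n x m = sup (PS f y n x m).
Proof. by []. Qed.

Lemma chain_bounds t m n : (forall i, (m <= i <= n)%N -> t i.+1 <= t i) ->
  forall i, (m <= i <= n.+1)%N -> t n.+1 <= t i /\ t i <= t m.
Proof.
move=> ht.
have up : forall d i, (m <= i)%N -> (i + d <= n.+1)%N -> t (i + d)%N <= t i.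
  elim=> [|d IH] i hi hd; first by rewrite addn0.
  idtac.
  apply: le_trans (IH i hi _); last by lia.
  rewrite addnS; apply: ht; lia.
move=> i /andP[h1 h2]; split.
  by have := up (n.+1 - i)%N i h1; rewrite (subnKC h2); apply.
by have := up (i - m)%N m (leqnn _); rewrite (subnKC h1); apply; lia.
Qed.

Lemma PS_ne f y n x m : (m <= n)%N -> y <= x -> PS f y n x m !=set0.
Proof.
move=> hmn yx.
set t := (fun j : nat => if j == n.+1 then y else x).
exists (\sum_(m <= i < n.+1) (f i (t i) - f i (t i.+1))).
exists t; split => //=.
- by rewrite /t eqxx.
- by rewrite /t; case: eqP => // e; move: hmn; rewrite e; lia.
- move=> i hi; rewrite /t eqSS.
  have -> : (i == n.+1) = false by apply/eqP; lia.
  by case: eqP.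
Qed.
Lemma PS_ub f y n x m : (forall i, continuous (f i)) -> y <= x ->
  has_ubound (PS f y n x m).
Proof.
move=> hf yx.
have /choice [M hM] : forall i, exists M : R, forall u, y <= u <= x -> `|f i u| <= M.
  move=> i.
  have [c _ hc] := @EVT_max R (fun u => `|f i u|) y x yx
    (continuous_subspaceT (fun u => continuous_comp (hf i u) (@norm_continuous _ R _))).
  exists `|f i c| => u hu; apply: hc; by rewrite in_itv.
exists (\sum_(m <= i < n.+1) (M i + M i)) => v [t [ty tx tm ->]].
apply: ler_sum_nat => i hi.
have cb := @chain_bounds t m n tm.
have [h1 h2] := cb i ltac:(lia).
have [h3 h4] := cb i.+1 ltac:(lia).
rewrite ty tx in h1 h2 h3 h4.
apply: le_trans (ler_norm _) _; apply: le_trans (ler_normB _ _) _.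
apply: lerD; apply: hM; apply/andP; by split.
Qed.
Lemma cross_exists t s k : t k.+1 <= s k.+1 -> s 1%N <= t 1%N -> (1 <= k)%N ->
  exists j, [/\ (1 <= j <= k)%N, s j <= t j & t j.+1 <= s j.+1].
Proof.
move=> hk h1 k1.
suff H : forall d i, (i + d)%N = k -> (1 <= i)%N -> s i <= t i ->
  exists j, [/\ (i <= j <= k)%N, s j <= t j & t j.+1 <= s j.+1].
  have [j [hj ? ?]] := H (k - 1)%N 1%N ltac:(lia) (leqnn _) h1.
  by exists j; split.
elim=> [|d IH] i hd hi hsi.
  exists i; split => //; first by apply/andP; split => //; lia.
  by rewrite addn0 in hd; rewrite hd.
have [le|lt] := leP (t i.+1) (s i.+1).
  by exists i; split => //; apply/andP; split => //; lia.
have [j [hj ? ?]] := IH i.+1 ltac:(lia) ltac:(lia) (ltW lt).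
by exists j; split => //; apply/andP; split; lia.
Qed.

Lemma lpp_quad f A B x z k : (forall i, continuous (f i)) -> (1 <= k)%N ->
  A <= B -> B <= x -> x <= z ->
  lpp f A k z 1 + lpp f B k x 1 <= lpp f A k x 1 + lpp f B k z 1.
Proof.
move=> hf k1 AB Bx xz.
set C := lpp f A k x 1 + lpp f B k z 1.
have Ax : A <= x by apply: le_trans Bx.
have key : forall a b, PS f A k z 1 a -> PS f B k x 1 b -> a + b <= C.
  move=> a b [t [tk t1 tm ->]] [s [sk s1 sm ->]].
  have [j [hj hsj htj]] := @cross_exists t s k ltac:(by rewrite tk sk)
     ltac:(by rewrite t1 s1) k1.
  set u := fun i => if (i <= j)%N then s i else t i.
  set v := fun i => if (i <= j)%N then t i else s i.
  have Hu : PS f A k x 1 (\sum_(1 <= i < k.+1) (f i (u i) - f i (u i.+1))).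
    exists u; split => //.
    - by rewrite /u; case: leqP => //; lia.
    - by rewrite /u; case: leqP => //; lia.
    - move=> i hi; rewrite /u; case: leqP => h1; case: leqP => h2; try lia;
        first [ (apply: sm; lia) | (apply: tm; lia) |
                (have -> : i = j by lia); by apply: le_trans htj (sm j _); lia ].
  have Hv : PS f B k z 1 (\sum_(1 <= i < k.+1) (f i (v i) - f i (v i.+1))).
    exists v; split => //.
    - by rewrite /v; case: leqP => //; lia.
    - by rewrite /v; case: leqP => //; lia.
    - move=> i hi; rewrite /v; case: leqP => h1; case: leqP => h2; try lia;
        first [ (apply: sm; lia) | (apply: tm; lia) |
                (have -> : i = j by lia); by apply: le_trans (sm j _) hsj; lia ].
  have e : \sum_(1 <= i < k.+1) (f i (t i) - f i (t i.+1)) +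
     \sum_(1 <= i < k.+1) (f i (s i) - f i (s i.+1)) =
     \sum_(1 <= i < k.+1) (f i (u i) - f i (u i.+1)) +
     \sum_(1 <= i < k.+1) (f i (v i) - f i (v i.+1)).
    rewrite -!big_split; apply: eq_big_nat => i hi /=.
    by rewrite /u /v; case: leqP => h1; case: leqP => h2; first [ring | lia].
  rewrite e; apply: lerD.
  - have H := ub_le_sup (@PS_ub f A k x 1%N hf Ax). exact: H.
  - have H := ub_le_sup (@PS_ub f B k z 1%N hf (le_trans Bx xz)). exact: H.
have h1 : forall b, PS f B k x 1 b -> lpp f A k z 1 <= C - b.
  move=> b hb; rewrite lppE; apply: ge_sup; first exact: PS_ne (le_trans Ax xz).
  move=> a ha; have := key a b ha hb; lra.
have h2 : lpp f B k x 1 <= C - lpp f A k z 1.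
  rewrite [lpp f B k x 1]lppE; apply: ge_sup; first exact: PS_ne Bx.
  move=> b hb; have := h1 b hb; lra.
lra.
Qed.
End LPP.


Section Pos.
Variable R : realType.

Lemma st_mono (a b : R) k : 0 < a -> a <= b -> start_time a k <= start_time b k.
Proof.
move=> a0 ab; rewrite /start_time lerN2; apply: ler_wsqrtr.
apply: ler_wpM2l => //; rewrite lef_pV2 ?posrE; lra.
Qed.

Lemma st_le (b x : R) k : 0 < b -> 2 * b * x ^+ 2 <= k%:R -> start_time b k <= x.
Proof.
move=> b0 h; rewrite /start_time.
have h1 : x ^+ 2 <= k%:R / (2 * b) by rewrite ler_pdivlMr; [lra|lra].
have := ler_wsqrtr h1; rewrite sqrtr_sqr => h2.
have := ler_norm (- x); rewrite normrN; lra.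
Qed.

Lemma rat_quad (L : nat -> R -> R) (S : R -> R -> R) :
  (forall i, continuous (L i)) ->
  (forall x y z : rat, 0 < y -> exists K : nat, forall k : nat, (K <= k)%N ->
      S (ratr y) (ratr z) - S (ratr y) (ratr x) =
      lpp L (start_time (ratr y) k) k (ratr z) 1
      - lpp L (start_time (ratr y) k) k (ratr x) 1) ->
  forall qa qb qx qz : rat, 0 < qa -> qa < qb -> qx <= qz ->
  S (ratr qa) (ratr qz) - S (ratr qa) (ratr qx) <=
  S (ratr qb) (ratr qz) - S (ratr qb) (ratr qx).
Proof.
move=> hL hS qa qb qx qz qa0 qab qxz.
have qb0 : 0 < qb by apply: lt_trans qab.
have [K1 hK1] := hS qx qa qz qa0.
have [K2 hK2] := hS qx qb qz qb0.
set N := (Num.Def.trunc (2 * ratr qb * (ratr qx : R) ^+ 2)).+1.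
set k := maxn (maxn K1 K2) (maxn N 1).
rewrite (hK1 k) ?(hK2 k); try (rewrite /k; lia).
have a0 : 0 < (ratr qa : R) by rewrite ltr0q.
have b0 : 0 < (ratr qb : R) by rewrite ltr0q.
have ab : (ratr qa : R) <= ratr qb by rewrite ler_rat ltW.
have xz : (ratr qx : R) <= ratr qz by rewrite ler_rat.
have AB : start_time (ratr qa : R) k <= start_time (ratr qb) k by apply: st_mono.
have Bx : start_time (ratr qb : R) k <= ratr qx.
  apply: st_le => //; apply: le_trans (ltW (truncnS_gt _)) _.
  rewrite ler_nat -/N /k; lia.
have k1 : (1 <= k)%N by rewrite /k; lia.
have := @lpp_quad R L _ _ _ _ k hL k1 AB Bx xz; lra.
Qed.
Lemma cont2_near (S : R -> R -> R) :
  continuous (fun p : R * R => S p.1 p.2) ->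
  forall u v eps, 0 < eps -> exists2 e, 0 < e &
    forall u' v', `|u - u'| < e -> `|v - v'| < e -> `|S u v - S u' v'| < eps.
Proof.
move=> hc u v eps eps0.
have := hc (u, v); move/cvgrPdist_lt => /(_ eps eps0) /nbhs_ballP [e e0 hb].
exists e => // u' v' h1 h2; apply: (hb (u', v')).
by split; rewrite -ball_normE.
Qed.

Lemma rat_near (x e : R) : 0 < e -> exists q : rat, x < ratr q < x + e.
Proof.
move=> e0; have [q] := @rat_in_itvoo R x (x + e) ltac:(lra).
by rewrite in_itv /= => h; exists q.
Qed.

Lemma real_quad (S : R -> R -> R) :
  continuous (fun p : R * R => S p.1 p.2) ->
  (forall qa qb qx qz : rat, 0 < qa -> qa < qb -> qx <= qz ->
    S (ratr qa) (ratr qz) - S (ratr qa) (ratr qx) <=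
    S (ratr qb) (ratr qz) - S (ratr qb) (ratr qx)) ->
  forall a b x z : R, 0 < a -> a < b -> x <= z ->
    S a z - S a x <= S b z - S b x.
Proof.
move=> hc hq a b x z a0 ab xz.
rewrite leNgt; apply/negP => H.
set eps := ((S a z - S a x) - (S b z - S b x)) / 4.
have eps0 : 0 < eps by rewrite /eps; lra.
have [e1 e10 h1] := cont2_near S hc b z _ eps0.
have [e2 e20 h2] := cont2_near S hc b x _ eps0.
have [e3 e30 h3] := cont2_near S hc a z _ eps0.
have [e4 e40 h4] := cont2_near S hc a x _ eps0.
have [e [e0 [le1 le2 le3 le4 le5]]] : exists e, 0 < e /\ [/\ e <= e1, e <= e2, e <= e3,
    e <= e4 & e <= b - a].
  exists (Num.min (Num.min e1 e2) (Num.min (Num.min e3 e4) (b - a))).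
  rewrite !lt_min !ge_min !lexx /= ?orbT; split.
    by rewrite e10 e20 e30 e40 /=; lra.
  by split.
have [qa /andP[qa1 qa2]] := rat_near a _ e0.
have [qb /andP[qb1 qb2]] := rat_near b _ e0.
have [qz /andP[qz1 qz2]] := rat_near z _ e0.
have [qx' /andP[qx1 qx2]] := rat_near (- x) _ e0.
set qx := - qx'.
have rqx : (ratr qx : R) = - ratr qx' by rewrite /qx rmorphN.
have := hq qa qb qx qz.
rewrite -(ltr0q R) -(ltr_rat R) -(ler_rat R) rqx.
move=> /(_ ltac:(lra) ltac:(lra) ltac:(lra)).
have := h1 (ratr qb) (ratr qz) ltac:(rewrite ltr_norml; lra) ltac:(rewrite ltr_norml; lra).
have := h2 (ratr qb) (- ratr qx') ltac:(rewrite ltr_norml; lra) ltac:(rewrite ltr_norml; lra).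
have := h3 (ratr qa) (ratr qz) ltac:(rewrite ltr_norml; lra) ltac:(rewrite ltr_norml; lra).
have := h4 (ratr qa) (- ratr qx') ltac:(rewrite ltr_norml; lra) ltac:(rewrite ltr_norml; lra).
rewrite !ltr_norml /eps => /andP[? ?] /andP[? ?] /andP[? ?] /andP[? ?].
lra.
Qed.
End Pos.

Section Transfer.
Context (R : realType) (d : measure_display) (Omega : measurableType d)
  (Pr : probability Omega R).

Lemma ae_count (T : countType) (P : T -> Omega -> Prop) :
  (forall t, \forall w \ae Pr, P t w) -> \forall w \ae Pr, forall t, P t w.
Proof.
move=> H.
have := @ae_foralln _ _ R Pr (fun n w => forall t, unpickle n = Some t -> P t w).
case.
  move=> n; case e: (unpickle n) => [t|].
    by apply: filterS (H t) => w Ht t' [<-].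
  by apply: nearW => w t'.
move=> N [mN N0 hN]; exists N; split => // w hw; apply: hN => /= Hn.
by apply: hw => t; apply: (Hn (pickle t)); rewrite pickleK.
Qed.

Lemma prob_fin {A : set Omega} : measurable A -> (Pr A = (fine (Pr A))%:E)%E.
Proof. by move=> mA; rewrite fineK // fin_num_measure. Qed.

Lemma incl_excl {A B C : set Omega} : measurable A -> measurable B -> measurable C ->
  fine (Pr (A `\` (B `|` C))) + fine (Pr (A `&` B)) + fine (Pr (A `&` C)) =
  fine (Pr A) + fine (Pr (A `&` B `&` C)).
Proof.
move=> mA mB mC.
have mAB : measurable (A `&` B) by apply: measurableI.
have mAC : measurable (A `&` C) by apply: measurableI.
have e1 : Pr A = (Pr (A `\` (B `|` C)) + Pr (A `&` (B `|` C)))%E.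
  by apply: measureDI => //; apply: measurableU.
have e2 : A `&` (B `|` C) = (A `&` B) `|` ((A `&` C) `\` (A `&` B)).
  apply/seteqP; split => w /=.
    move=> [hA [hB|hC]]; first by left.
    case: (pselect (B w)) => hB; first by left.
    by right; split => // -[].
  by move=> [[? ?]|[[? ?] ?]]; split => //; [left|right].
have e3 : Pr ((A `&` B) `|` ((A `&` C) `\` (A `&` B))) =
          (Pr (A `&` B) + Pr ((A `&` C) `\` (A `&` B)))%E.
  apply: measureU => //; first exact: measurableD.
  by apply/seteqP; split => w //= [[? ?] [[? ?]]]; apply.
have e4 : Pr (A `&` C) = (Pr ((A `&` C) `\` (A `&` B)) + Pr (A `&` C `&` (A `&` B)))%E.
  by apply: measureDI.
have e5 : A `&` C `&` (A `&` B) = A `&` B `&` C.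
  by apply/seteqP; split => w /= ; [move=> [[? ?] [? ?]]|move=> [[? ?] ?]].
rewrite e5 in e4; rewrite e2 e3 in e1.
have mD1 : measurable (A `\` (B `|` C)) by apply: measurableD => //; apply: measurableU.
have mD2 : measurable ((A `&` C) `\` (A `&` B)) by apply: measurableD.
have mABC : measurable (A `&` B `&` C) by apply: measurableI.
move: e1 e4.
rewrite (prob_fin mA) (prob_fin mD1) (prob_fin mAB) (prob_fin mAC) (prob_fin mD2)
  (prob_fin mABC) -!EFinD => -[e1] [e4].
lra.
Qed.

Definition O (F : Omega -> R -> R -> R) (l : seq (R * R * R)) :=
  [set w | forall p, p \in l -> F w p.1.1 p.1.2 <= p.2].

Lemma O_cat F l1 l2 : O F (l1 ++ l2) = O F l1 `&` O F l2.
Proof.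
apply/seteqP; split => w /=.
  by move=> h; split => p hp; apply: h; rewrite mem_cat hp ?orbT.
by move=> [h1 h2] p; rewrite mem_cat => /orP[/h1|/h2].
Qed.

Lemma O_meas {F} : (forall x y, measurable_fun setT (fun w => F w x y)) ->
  forall l, measurable (O F l).
Proof.
move=> hF; elim=> [|p l IH].
  by rewrite (_ : O F [::] = setT) //; apply/seteqP; split => w //= _ p.
rewrite (_ : O F (p :: l) = ((fun w => F w p.1.1 p.1.2) @^-1` `]-oo, p.2]) `&` O F l).
  apply: measurableI => //.
  by have := hF p.1.1 p.1.2 measurableT _ (measurable_itv `]-oo, p.2]); rewrite setTI.
apply/seteqP; split => w /=.
  move=> h; split; last by move=> q hq; apply: h; rewrite inE hq orbT.
  by rewrite in_itv /= ?andbT; apply: h; rewrite mem_head.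
rewrite in_itv /= ?andbT => -[h1 h2] q; rewrite inE => /orP[/eqP->|/h2] //.
Qed.

Definition piece F (p1 p2 p3 p4 : R * R) (a b c e : R) :=
  O F [:: (p1, a); (p4, e)] `\` (O F [:: (p2, b)] `|` O F [:: (p3, c)]).

Lemma piece_eq F G p1 p2 p3 p4 a b c e :
  (forall x y, measurable_fun setT (fun w => F w x y)) ->
  (forall x y, measurable_fun setT (fun w => G w x y)) ->
  (forall l, Pr (O F l) = Pr (O G l)) ->
  fine (Pr (piece F p1 p2 p3 p4 a b c e)) = fine (Pr (piece G p1 p2 p3 p4 a b c e)).
Proof.
move=> hF hG hFG.
have i1 := incl_excl (O_meas hF [:: (p1, a); (p4, e)]) (O_meas hF [:: (p2, b)])
  (O_meas hF [:: (p3, c)]).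
have i2 := incl_excl (O_meas hG [:: (p1, a); (p4, e)]) (O_meas hG [:: (p2, b)])
  (O_meas hG [:: (p3, c)]).
rewrite -!O_cat !hFG in i1.
rewrite -!O_cat in i2.
rewrite /piece; lra.
Qed.

Lemma rat4 (V1 V2 V3 V4 : R) : V1 + V4 < V2 + V3 -> exists qa qb qc qe : rat,
  [/\ V1 <= ratr qa, V4 <= ratr qe, ratr qb < V2, ratr qc < V3 &
      ratr qa + ratr qe < ratr qb + ratr qc :> R].
Proof.
move=> bad.
set g := (V2 + V3 - (V1 + V4)) / 4.
have g0 : 0 < g by rewrite /g; lra.
have [qa /andP[qa1 qa2]] := @rat_near R V1 _ g0.
have [qe /andP[qe1 qe2]] := @rat_near R V4 _ g0.
have [qb /andP[qb1 qb2]] := @rat_near R (- V2) _ g0.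
have [qc /andP[qc1 qc2]] := @rat_near R (- V3) _ g0.
exists qa, (- qb), (- qc), qe; rewrite !rmorphN; split; rewrite /g in qa2 qe2 qb2 qc2; lra.
Qed.

Lemma transfer (S S' : Omega -> R -> R -> R) (p1 p2 p3 p4 : R * R) :
  (forall x y, measurable_fun setT (fun w => S w x y)) ->
  (forall x y, measurable_fun setT (fun w => S' w x y)) ->
  (forall l, Pr (O S' l) = Pr (O S l)) ->
  (\forall w \ae Pr, S' w p2.1 p2.2 + S' w p3.1 p3.2 <= S' w p1.1 p1.2 + S' w p4.1 p4.2) ->
  \forall w \ae Pr, S w p2.1 p2.2 + S w p3.1 p3.2 <= S w p1.1 p1.2 + S w p4.1 p4.2.
Proof.
move=> hS hS' hSS' [N [mN N0 hN]].
have H : forall q : rat * rat * rat * rat, \forall w \ae Pr,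
    (ratr q.1.1.1 + ratr q.2 < ratr q.1.1.2 + ratr q.1.2 :> R) ->
    ~ piece S p1 p2 p3 p4 (ratr q.1.1.1) (ratr q.1.1.2) (ratr q.1.2) (ratr q.2) w.
  move=> [[[qa qb] qc] qe] /=.
  set a : R := ratr qa; set b : R := ratr qb; set c : R := ratr qc; set e : R := ratr qe.
  have mP : measurable (piece S p1 p2 p3 p4 a b c e).
    by apply: measurableD; [|apply: measurableU]; exact: O_meas.
  have mP' : measurable (piece S' p1 p2 p3 p4 a b c e).
    by apply: measurableD; [|apply: measurableU]; exact: O_meas.
  case: (pselect (a + e < b + c)) => hc; last by apply: nearW => w /hc.
  have P0' : Pr (piece S' p1 p2 p3 p4 a b c e) = 0%E.
    apply: (subset_measure0 mP' mN) => // w [hA hBC]; apply: hN => /= hgood.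
    have h1 : S' w p1.1 p1.2 <= a by apply: (hA (p1, a)); rewrite mem_head.
    have h4 : S' w p4.1 p4.2 <= e by apply: (hA (p4, e)); rewrite !inE eqxx orbT.
    have h2 : b < S' w p2.1 p2.2.
      rewrite ltNge; apply/negP => h; apply: hBC; left => q.
      by rewrite inE => /eqP ->.
    have h3 : c < S' w p3.1 p3.2.
      rewrite ltNge; apply/negP => h; apply: hBC; right => q.
      by rewrite inE => /eqP ->.
    clear -h1 h4 h2 h3 hc hgood; lra.
  have P0 : Pr (piece S p1 p2 p3 p4 a b c e) = 0%E.
    rewrite (prob_fin mP) (piece_eq _ _ _ _ _ _ _ _ _ _ hS hS'); last by move=> l; rewrite hSS'.
    by rewrite P0'.
  exists (piece S p1 p2 p3 p4 a b c e); split => // w /= h.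
  by apply: contrapT => hp; apply: h => _.
clear N0 hN.
have := ae_count _ _ H.
apply: filterS => w hw.
rewrite leNgt; apply/negP => bad.
have [qa [qb [qc [qe [h1 h4 h2 h3 hq]]]]] := rat4 _ _ _ _ bad.
apply: (hw (qa, qb, qc, qe)) => //=.
split.
  by move=> q; rewrite !inE => /orP[/eqP->|/eqP->] /=.
move=> [] h.
  by have := h (p2, ratr qb) (mem_head _ _); rewrite /=; lra.
by have := h (p3, ratr qc) (mem_head _ _); rewrite /=; lra.
Qed.
End Transfer.

Lemma cont_slice (R : realType) (F : R -> R -> R) (c : R) :
  continuous (fun p : R * R => F p.1 p.2) -> continuous (F c).
Proof.
move=> hc x.
have h : (fun y : R => (c, y)) @ x --> (c, x).
  exact: (cvg_pair (cvg_cst c) cvg_id).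
exact: (continuous_comp h (hc (c, x))).
Qed.

Lemma cont_homo (R : realType) (D : R -> R) : continuous D ->
  (forall qx qz : rat, qx <= qz -> D (ratr qx) <= D (ratr qz)) ->
  {homo D : x y / x <= y}.
Proof.
move=> hc hq x z xz.
rewrite leNgt; apply/negP => H.
set eps := (D x - D z) / 2.
have eps0 : 0 < eps by rewrite /eps; lra.
have near (u : R) : exists2 e, 0 < e & forall u', `|u - u'| < e -> `|D u - D u'| < eps.
  have := hc u; move/cvgrPdist_lt => /(_ eps eps0) /nbhs_ballP [e e0 hb].
  by exists e => // u' hu; apply: hb; rewrite -ball_normE.
have [e1 e10 h1] := near x.
have [e2 e20 h2] := near z.
have [qx' /andP[qx1 qx2]] := @rat_near R (- x) _ e10.
have [qz /andP[qz1 qz2]] := @rat_near R z _ e20.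
have := hq (- qx') qz.
rewrite -(ler_rat R) rmorphN => /(_ ltac:(lra)).
have := h1 (- ratr qx') ltac:(rewrite ltr_norml; lra).
have := h2 (ratr qz) ltac:(rewrite ltr_norml; lra).
rewrite !ltr_norml /eps => /andP[? ?] /andP[? ?]; lra.
Qed.

Theorem lemma1p1 (R : realType) (d : measure_display) (Omega : measurableType d)
    (Pr : probability Omega R) (S : Omega -> R -> R -> R) (ya yb : R) :
  is_parabolic_Airy_sheet Pr S -> ya < yb ->
  \forall w \ae Pr,
    continuous (fun x => S w yb x - S w ya x) /\
    {homo (fun x => S w yb x - S w ya x) : x y / x <= y}.
Proof.
move=> [hm [hc [hsh [L [hLE _ hcoup]]]]] yab.
have hLc : forall w i, continuous (L w i) by case: hLE => _ [].
have pos : \forall w \ae Pr, forall a b x z : R, 0 < a -> a < b -> x <= z ->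
    S w a z - S w a x <= S w b z - S w b x.
  apply: filterS hcoup => w hw.
  apply: real_quad; first exact: hc.
  exact: rat_quad (hLc w) hw.
set z0 := `|ya| + 1.
have hq : forall q : rat * rat, \forall w \ae Pr, q.1 <= q.2 ->
    S w yb (ratr q.1) + S w ya (ratr q.2) <= S w yb (ratr q.2) + S w ya (ratr q.1).
  move=> [qx qz] /=.
  case: (pselect (qx <= qz)) => hxz; last by apply: nearW => w /hxz.
  have := @transfer R d Omega Pr S (fun w x y => S w (x + z0) (y + z0))
    (yb, ratr qz) (yb, ratr qx) (ya, ratr qz) (ya, ratr qx) hm
    (fun x y => hm (x + z0) (y + z0)) (fun l => hsh z0 l).
  move=> /(_ _) /=; case.
    apply: filterS pos => w hw.
    have : 0 < ya + z0 by rewrite /z0; have := ler_norm (- ya); rewrite normrN; lra.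
    move=> h0.
    have := hw (ya + z0) (yb + z0) (ratr qx + z0) (ratr qz + z0) h0 ltac:(lra)
      ltac:(rewrite lerD2r ler_rat; exact: hxz).
    lra.
  move=> N [mN N0 hN]; exists N; split => // w hw; apply: hN => hg; apply: hw => _.
  exact: hg.
have := @ae_count R d Omega Pr _ _ hq.
apply: filterS => w hw.
have cD : continuous (fun x => S w yb x - S w ya x).
  move=> x; apply: cvgB; [exact: cont_slice (hc w) x | exact: cont_slice (hc w) x].
split => //; apply: cont_homo => // qx qz hxz.
have := hw (qx, qz) hxz; rewrite /=; lra.
Qed.
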